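(* Let $e_1,e_2,e_3$ be nonzero integers with $e_1+e_2+e_3=0$, $\gcd(e_1,e_2,e_3)\in\{1,2\}$ and $v_2(e_1)=v_2(e_2)<v_2(e_3)$. Let $(a,b,c)$ be a primitive triple of odd integers with $e_1a^2+e_2b^2+e_3c^2=0$ and $a\equiv b\equiv c\equiv 1\pmod 4$. Let $n$ be a positive integer all of whose prime factors are nonzero quadratic residues modulo each odd prime factor of $e_1e_2e_3$. Then $\frac18(a+b)(b+c)(c+a)$ is an integer congruent to $1$ modulo $4$, and it is a quadratic residue modulo each prime factor of $n$.
   Context: $v_2$ denotes the $2$-adic valuation. *)

(* Defs.v *)
From mathcomp Require Import all_boot all_algebra.
Set Implicit Arguments. Unset Strict Implicit. Unset Printing Implicit Defensive.
Import GRing.Theory Num.Theory.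
Local Open Scope ring_scope.

Definition v2 (z : int) : nat := logn 2 `|z|%N.

Definition is_qr (m : int) (q : nat) : Prop :=
  exists x : int, (x ^+ 2 = m %[mod q%:Z])%Z.

Definition is_nonzero_qr (m : int) (q : nat) : Prop :=
  ~~ (q%:Z %| m)%Z /\ is_qr m q.

(* Main.v *)
Require Import Defs.
From mathcomp Require Import all_boot all_algebra.
From mathcomp Require Import all_field.
From mathcomp Require Import zify ring lra.
Import GRing.Theory Num.Theory.
Local Open Scope ring_scope.

Lemma ff_Fermat (F : finFieldType) (x : F) : x != 0 -> x ^+ #|F|.-1 = 1.
Proof.
move=> nz; have := expf_card x.
have h : #|F| = #|F|.-1.+1 by rewrite prednK // (cardD1 x).
rewrite {1}h exprS => E; apply: (mulfI nz); by rewrite mulr1.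
Qed.

Section Fp.
Variable p : nat.
Hypothesis pr : prime p.

Lemma Fp_nat0 n : (n%:R == 0 :> 'F_p) = (p %| n)%N.
Proof. by rewrite (dvdn_pcharf (pchar_Fp pr)). Qed.

Lemma Fp_natE m n : (m%:R == n%:R :> 'F_p) = (m == n %[mod p])%N.
Proof. by rewrite -val_eqE /= !val_Fp_nat. Qed.

Lemma Fp_int0 z : (z%:~R == 0 :> 'F_p) = (p%:Z %| z)%Z.
Proof.
case: z => n; rewrite dvdzE /=; first by rewrite Fp_nat0.
by rewrite NegzE mulrNz oppr_eq0 -Fp_nat0.
Qed.

Lemma Fp_intE a b : (a%:~R == b%:~R :> 'F_p) = (a == b %[mod p])%Z.
Proof. by rewrite eqz_mod_dvd -Fp_int0 intrB subr_eq0. Qed.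

Lemma Fp_Fermat (x : 'F_p) : x != 0 -> x ^+ p.-1 = 1.
Proof. by move=> nz; have := @ff_Fermat _ x nz; rewrite card_Fp. Qed.

Lemma Fp_small_eq m n : (m < p)%N -> (n < p)%N -> (m%:R = n%:R :> 'F_p) -> m = n.
Proof. by move=> hm hn /eqP; rewrite Fp_natE !modn_small // => /eqP. Qed.

Lemma Fp_pm_eq m n : odd p -> (0 < m <= p./2)%N -> (0 < n <= p./2)%N ->
  (m%:R = n%:R :> 'F_p) \/ (m%:R = - n%:R :> 'F_p) -> m = n.
Proof.
move=> op /andP[m0 mh] /andP[n0 nh] [].
  by apply: Fp_small_eq; rewrite -divn2 in mh nh; lia.
move/eqP; rewrite -subr_eq0 opprK -natrD Fp_nat0 => /dvdn_leq.
rewrite -divn2 in mh nh; lia.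
Qed.

Lemma Fp_euler (x : 'F_p) : odd p -> x ^+ p./2 = 1 -> exists y : 'F_p, y ^+ 2 = x.
Proof.
move=> op hx.
case: (boolP [exists y : 'F_p, y ^+ 2 == x]) => [/existsP [y /eqP] | nex]; first by exists y.
have p3 : (0 < p./2)%N by have := prime_gt1 pr; rewrite -divn2; lia.
pose s := x :: map (fun i : 'I_p./2 => (i.+1)%:R ^+ 2 : 'F_p) (enum 'I_p./2).
have hall : all (root ('X^(p./2) - 1)) s.
  apply/allP => y; rewrite inE => /orP [/eqP -> | /mapP [i _ ->]].
    by rewrite -/(p./2.-unity_root x) unity_rootE hx.
  rewrite -/(p./2.-unity_root _) unity_rootE -exprM.
  have -> : (2 * p./2 = p.-1)%N by rewrite -divn2; lia.
  rewrite Fp_Fermat // Fp_nat0; apply/negP => /dvdn_leq.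
  move: (nat_of_ord i) (ltn_ord i) => k hk; rewrite -divn2 in hk; lia.
have hu : uniq s.
  rewrite /= map_inj_uniq ?enum_uniq ?andbT.
    apply/negP => /mapP [i _ e]; move/existsP: nex; apply; exists (i.+1%:R); by rewrite e.
  move=> i j /eqP; rewrite eqf_sqr => /orP h; apply: val_inj => /=.
  have : i.+1 = j.+1.
    apply: Fp_pm_eq => //; first by have := ltn_ord i; move: (nat_of_ord i) => k hk; lia.
      by have := ltn_ord j; move: (nat_of_ord j) => k hk; lia.
    by case: h => /eqP; [left | right].
  by case.
have hne : ('X^(p./2) - 1 : {poly 'F_p}) != 0 by rewrite -size_poly_eq0 size_XnsubC.
have := max_poly_roots hne hall hu.
by rewrite size_XnsubC // /= size_map size_enum_ord ltnn.
Qed.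

End Fp.


Section Gauss.
Variables p q : nat.
Hypothesis pr : prime p.
Hypothesis op : odd p.
Hypothesis pq : ~~ (p %| q)%N.
Hypothesis oq : odd q.

Let h := p./2.
Let t (i : nat) := ((q * i.+1) %% p)%N.
Let bg (i : nat) := (h < t i)%N.
Let f (i : nat) := if bg i then (p - t i)%N else t i.

Lemma hp : (h.*2.+1 = p)%N.
Proof. by rewrite /h -divn2; lia. Qed.

Lemma t_pos i : (i < h)%N -> (0 < t i < p)%N.
Proof.
move=> ih; rewrite /t (ltn_pmod _ (prime_gt0 pr)) andbT lt0n; apply/negP => /eqP.
move/eqP; rewrite -/(dvdn p _) Euclid_dvdM // (negbTE pq) /= => /dvdn_leq.
have := hp; rewrite /h; lia.
Qed.

Lemma f_range i : (i < h)%N -> (0 < f i <= h)%N.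
Proof. move=> ih; have := t_pos _ ih; have := hp; rewrite /f /bg; case: ifP; lia. Qed.

Lemma f_Fp i : (i < h)%N -> ((q * i.+1)%:R : 'F_p) = (-1) ^+ bg i * (f i)%:R.
Proof.
move=> ih; rewrite -Fp_nat_mod // -/(t i) /f; case: (bg i); last by rewrite expr0 mul1r.
have := t_pos _ ih => /andP [_ /ltnW tp].
by rewrite natrB // pchar_Fp_0 // sub0r expr1 mulN1r opprK.
Qed.

Definition gg (i : 'I_h) : 'I_h := insubd i (f i).-1.

Lemma gg_val i : (gg i).+1 = f i.
Proof.
rewrite /gg val_insubd; have := f_range _ (ltn_ord i); case: ifP => /=; lia.
Qed.

Lemma sign_sq (b : bool) : ((-1) ^+ b : 'F_p) * (-1) ^+ b = 1.
Proof. by case: b; rewrite ?expr0 ?expr1 ?mulr1 ?mulrNN ?mulr1. Qed.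

Lemma gg_inj : injective gg.
Proof.
move=> i j e; have : f i = f j by rewrite -!gg_val e.
move=> efij.
have ei := f_Fp _ (ltn_ord i); have ej := f_Fp _ (ltn_ord j).
have qnz : (q%:R : 'F_p) != 0 by rewrite Fp_nat0.
have key : ((i.+1)%:R : 'F_p) = (-1) ^+ bg i * (-1) ^+ bg j * (j.+1)%:R.
  apply: (mulfI qnz); rewrite -natrM ei efij mulrCA -natrM ej.
  by rewrite -!mulrA (mulrA ((-1) ^+ bg j)) sign_sq mul1r.
apply: val_inj; have : i.+1 = j.+1; last by case.
apply: (@Fp_pm_eq p pr _ _ op).
- by have := ltn_ord i; move: (nat_of_ord i) => k; rewrite /h; lia.
- by have := ltn_ord j; move: (nat_of_ord j) => k; rewrite /h; lia.
move: key; case: (bg i); case: (bg j); rewrite ?expr0 ?expr1 ?mulr1 ?mulrNN ?mulr1 ?mul1r ?mulN1r;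
  by [left | right].
Qed.

Lemma gauss_lemma : (q%:R : 'F_p) ^+ h = (-1) ^+ (\sum_(i < h) (q * i.+1) %/ p)%N.
Proof.
have P1 : \prod_(i < h) ((q * i.+1)%:R : 'F_p) = q%:R ^+ h * \prod_(i < h) (i.+1)%:R.
  by rewrite (eq_bigr (fun i : 'I_h => q%:R * (i.+1)%:R)) ?big_split /= ?prodr_const ?card_ord // => i _; rewrite natrM.
have P2 : \prod_(i < h) ((q * i.+1)%:R : 'F_p) = (-1) ^+ (\sum_(i < h) bg i)%N * \prod_(i < h) (i.+1)%:R.
  rewrite (eq_bigr (fun i : 'I_h => (-1) ^+ bg i * (f i)%:R)); last by move=> i _; rewrite f_Fp.
  rewrite big_split /=; congr (_ * _).
    by rewrite (big_morph (fun n => (-1) ^+ n : 'F_p) (fun m n => exprD (-1) m n) (expr0 (-1))).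
  rewrite [RHS](reindex_inj gg_inj) /=; apply: eq_bigr => i _; by rewrite gg_val.
have nz : \prod_(i < h) ((i.+1)%:R : 'F_p) != 0.
  apply/prodf_neq0 => i _; rewrite Fp_nat0 //; apply/negP => /dvdn_leq.
  by have := ltn_ord i; move: (nat_of_ord i) => k; have := hp; rewrite /h; lia.
have E : (q%:R : 'F_p) ^+ h = (-1) ^+ (\sum_(i < h) bg i)%N.
  by apply: (mulIf nz); rewrite -P1 P2.
rewrite E -signr_odd -[in RHS]signr_odd; congr (_ ^+ _).
set F := (\sum_(i < h) (q * i.+1) %/ p)%N.
set mu := (\sum_(i < h) bg i)%N.
set S := (\sum_(i < h) i.+1)%N.
set T := (\sum_(i < h) t i)%N.
set X := (\sum_(i < h) (bg i * f i))%N.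
have E1 : (q * S = F * p + T)%N.
  rewrite /S big_distrr /F /T big_distrl -big_split /=; apply: eq_bigr => i _.
  by rewrite /t -divn_eq.
have E2 : (T + 2 * X = S + mu * p)%N.
  rewrite /T /X big_distrr -big_split /= /mu big_distrl /=.
  have -> : S = (\sum_(i < h) f i)%N.
    by rewrite /S (reindex_inj gg_inj) /=; apply: eq_bigr => i _; rewrite gg_val.
  rewrite -big_split /=; apply: eq_bigr => i _.
  have := t_pos _ (ltn_ord i); rewrite /f /bg; case: ifP => /= _; lia.
have E3 : (q * S + 2 * X = F * p + S + mu * p)%N by lia.
have := congr1 odd E3; rewrite !oddD !oddM /= oq op /= !andbT.
by case: (odd S); case: (odd F); case: (odd mu); case: (odd X).
Qed.
End Gauss.

Section Lat.
Local Open Scope nat_scope.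

Lemma count_lt n K : (\sum_(j < n) (j < K : nat) = minn n K)%N.
Proof.
elim: n => [|n IH]; first by rewrite big_ord0 min0n.
rewrite big_ord_recr /= IH; case: (ltnP n K) => /= h; lia.
Qed.

Lemma inner_count p q i : prime p -> ~~ (p %| q)%N -> odd p -> odd q -> (i < p./2)%N ->
  (\sum_(j < q./2) (p * j.+1 < q * i.+1 : nat) = q * i.+1 %/ p)%N.
Proof.
move=> pr pq op oq ih.
have p0 := prime_gt0 pr.
rewrite (eq_bigr (fun j : 'I_q./2 => (j < q * i.+1 %/ p : nat))); last first.
  move=> j _; congr nat_of_bool.
  rewrite -[(j < _)%N]/(j.+1 <= _)%N leq_divRL // [(j.+1 * p)%N]mulnC.
  have ne : (p * j.+1 != q * i.+1)%N.
    apply/eqP => e; have : (p %| q * i.+1)%N by rewrite -e dvdn_mulr.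
    rewrite Euclid_dvdM // (negbTE pq) /= => /dvdn_leq; rewrite -divn2 in ih; lia.
  by rewrite ltn_neqAle ne.
rewrite count_lt; apply/minn_idPr.
rewrite -ltnS ltn_divLR //. rewrite -!divn2 in ih *. nia.
Qed.

Lemma lattice p q : prime p -> prime q -> odd p -> odd q -> p != q ->
  (\sum_(i < p./2) (q * i.+1 %/ p) + \sum_(j < q./2) (p * j.+1 %/ q) = p./2 * q./2)%N.
Proof.
move=> pr qr op oq pq.
have pq' : ~~ (p %| q)%N by rewrite dvdn_prime2 //.
have qp' : ~~ (q %| p)%N by rewrite dvdn_prime2 // eq_sym.
rewrite (eq_bigr (fun i : 'I_p./2 => \sum_(j < q./2) (p * j.+1 < q * i.+1 : nat)))%N; last first.
  by move=> i _; rewrite inner_count.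
rewrite [X in (_ + X)%N](eq_bigr (fun j : 'I_q./2 => \sum_(i < p./2) (q * i.+1 < p * j.+1 : nat)))%N; last first.
  by move=> j _; rewrite inner_count.
rewrite [X in (_ + X)%N](exchange_big) /= -big_split /=.
rewrite (eq_bigr (fun i : 'I_p./2 => q./2)); first by rewrite sum_nat_const card_ord.
move=> i _; rewrite -big_split /=.
rewrite (eq_bigr (fun j : 'I_q./2 => 1%N)); first by rewrite sum_nat_const card_ord muln1.
move=> j _.
have ne : (p * j.+1 != q * i.+1)%N.
  apply/eqP => e; have : (p %| q * i.+1)%N by rewrite -e dvdn_mulr.
  rewrite Euclid_dvdM // (negbTE pq') /= => /dvdn_leq.
  have := ltn_ord i; move: (nat_of_ord i) => k; rewrite -divn2; lia.
move: ne; case: (ltngtP (p * j.+1) (q * i.+1)) => //.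
Qed.

End Lat.

Lemma recip p q : prime p -> prime q -> odd p -> odd q -> p != q ->
  (p%:R : 'F_q) ^+ q./2 = 1 -> (q%:R : 'F_p) ^+ p./2 = (-1) ^+ (p./2 * q./2)%N.
Proof.
move=> pr qr op oq pq H.
have pq' : ~~ (p %| q)%N by rewrite dvdn_prime2.
have qp' : ~~ (q %| p)%N by rewrite dvdn_prime2 // eq_sym.
have Gq := @gauss_lemma q p qr oq qp' op.
have Gp := @gauss_lemma p q pr op pq' oq.
rewrite Gp -signr_odd -[in RHS]signr_odd -(@lattice p q pr qr op oq pq) oddD.
rewrite H -signr_odd in Gq.
have -> : odd (\sum_(j < q./2) (p * j.+1 %/ q))%N = false.
  apply/negP => od; move: Gq; rewrite od expr1 => /eqP.
  rewrite -subr_eq0 opprK -[1 + 1 : 'F_q]/(2%:R) Fp_nat0 // => /dvdn_leq.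
  have := prime_gt1 qr; move: oq; rewrite -[q]prednK ?prime_gt0 //; lia.
by rewrite addbF.
Qed.


Lemma half_mul q M : odd q -> odd M -> odd (q*M)./2 = odd q./2 (+) odd M./2.
Proof. move=> H H'. rewrite -!divn2. lia. Qed.

Lemma half_sq q M : odd q -> odd (q * q * M)./2 = odd M./2.
Proof. move=> H. rewrite -!divn2. nia. Qed.

Lemma sign_eq (R : pzRingType) m n : odd m = odd n -> (-1) ^+ m = (-1) ^+ n :> R.
Proof. by move=> h; rewrite -signr_odd h signr_odd. Qed.

Lemma jac p : prime p -> odd p -> forall M : nat, odd M -> ~~ (p %| M)%N ->
  (forall r, prime r -> (r %| M)%N -> ((p%:R : 'F_r) ^+ r./2 = 1) \/ ~~ odd (logn r M)) ->
  (M%:R : 'F_p) ^+ p./2 = (-1) ^+ (p./2 * M./2)%N.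
Proof.
move=> pr op; elim/ltn_ind => M IH oM pM C.
have M0 : (0 < M)%N by case: M oM {IH pM C}.
case: (leqP M 1) => M1.
  have -> : M = 1%N by lia.
  by rewrite expr1n muln0 expr0.
set r := pdiv M.
have rr : prime r := pdiv_prime M1.
have rM : (r %| M)%N := pdiv_dvd M.
have r1 := prime_gt1 rr.
have or : odd r.
  apply/negPn/negP => er; have h2 : (2 %| M)%N.
    by apply: dvdn_trans rM; rewrite dvdn2.
  by move: h2; rewrite dvdn2 oM.
have rp : r != p by apply/negP => /eqP e; move: pM; rewrite -e rM.
have rFp : (r%:R : 'F_p) != 0.
  by rewrite Fp_nat0 // dvdn_prime2 // eq_sym.
case: (C r rr rM) => [Hr | ev].
  have eM : M = (r * (M %/ r))%N by rewrite mulnC divnK.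
  set M' := (M %/ r)%N in eM.
  have M'0 : (0 < M')%N by move: M0; rewrite eM muln_gt0 => /andP [].
  have oM' : odd M' by move: oM; rewrite eM oddM => /andP [].
  have IH' := IH M'.
  have {IH'} IH' := IH' ltac:(by rewrite eM ltn_Pmull) oM'
    ltac:(by apply: contra pM => h; rewrite eM dvdn_mull).
  rewrite eM natrM exprMn IH'; last first.
    move=> s sr sM'.
    have sM : (s %| M)%N by rewrite eM dvdn_mull.
    case: (eqVneq s r) => [-> | ne]; first by left.
    case: (C s sr sM) => [|h]; first by left.
    right; move: h; rewrite eM (lognM _ (prime_gt0 rr) M'0) logn_prime // (negbTE ne) //.
  rewrite (@recip p r pr rr op or) 1?eq_sym // -exprD; apply: sign_eq.
  by rewrite oddD !oddM half_mul // andb_addr.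
have lg : (2 <= logn r M)%N.
  have : (0 < logn r M)%N by rewrite logn_gt0 mem_primes rr M0 rM.
  by move: ev; case: (logn r M) => [|[|]].
have eM : M = (r ^ 2 * (M %/ r ^ 2))%N.
  by rewrite mulnC divnK // pfactor_dvdn.
set M' := (M %/ r ^ 2)%N in eM.
have M'0 : (0 < M')%N by move: M0; rewrite eM muln_gt0 => /andP [].
have oM' : odd M' by move: oM; rewrite eM oddM => /andP [].
have IH' := IH M'.
have r2 : (1 < r ^ 2)%N by rewrite -[1%N](exp1n 2) ltn_exp2r.
have {IH'} IH' := IH' ltac:(by rewrite eM ltn_Pmull) oM'
  ltac:(by apply: contra pM => h; rewrite eM dvdn_mull).
rewrite eM natrM exprMn IH'; last first.
  move=> s sr sM'.
  have sM : (s %| M)%N by rewrite eM dvdn_mull.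
  case: (C s sr sM) => [|h]; first by left.
  right; move: h; have r20 : (0 < r ^ 2)%N by rewrite expn_gt0 prime_gt0.
  rewrite eM (lognM _ r20 M'0) lognX logn_prime //.
  by rewrite oddD oddM /= => ->.
rewrite natrX -exprM.
have -> : (2 * p./2 = p.-1)%N by move: op; rewrite -divn2; clear; lia.
rewrite Fp_Fermat // mul1r; apply: sign_eq.
by rewrite !oddM expnS expn1 half_sq.
Qed.


Section Val.
Variable q : nat.
Hypothesis qr : prime q.
Hypothesis oq : odd q.
Local Notation D x := (q%:Z %| x)%Z.

Lemma DM x y : D (x * y) = D x || D y.
Proof. by rewrite !dvdzE abszM Euclid_dvdM. Qed.

Lemma D2 x : D (2 * x) -> D x.
Proof.
rewrite DM => /orP [|//]; rewrite dvdzE /= => /dvdn_leq.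
move=> h; have := prime_gt1 qr; move: oq h; clear; lia.
Qed.

Lemma Dnz x : ~~ D x -> x != 0.
Proof. by apply: contra => /eqP ->; apply: dvdz0. Qed.

Lemma logn_nd x : ~~ D x -> logn q `|x|%N = 0%N.
Proof. by move=> h; apply: logn_coprime; rewrite prime_coprime // -(absz_nat q) -dvdzE. Qed.

Lemma vlem e e' X Y X' Y' : e * (Y * X) = e' * (Y' * X') ->
  ~~ D e -> ~~ D e' -> ~~ D Y -> ~~ D Y' -> X != 0 -> X' != 0 ->
  logn q `|X|%N = logn q `|X'|%N.
Proof.
move=> E he he' hY hY' hX hX'.
have := congr1 (fun z => logn q `|z|%N) E => /=.
have pe : (0 < `|e|)%N by rewrite absz_gt0 Dnz.
have pe' : (0 < `|e'|)%N by rewrite absz_gt0 Dnz.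
have pY : (0 < `|Y|)%N by rewrite absz_gt0 Dnz.
have pY' : (0 < `|Y'|)%N by rewrite absz_gt0 Dnz.
have pX : (0 < `|X|)%N by rewrite absz_gt0.
have pX' : (0 < `|X'|)%N by rewrite absz_gt0.
rewrite !abszM !lognM ?muln_gt0 ?pe ?pe' ?pY ?pY' ?pX ?pX' //.
rewrite (logn_nd _ he) (logn_nd _ hY) (logn_nd _ he') (logn_nd _ hY').
by rewrite !add0n.
Qed.

Lemma Aval (a b c e1 e2 e3 : int) :
 ~~ D e1 -> ~~ D e2 -> ~~ D e3 ->
 e1 * ((a - b) * (a + b)) = e3 * ((b - c) * (b + c)) ->
 e2 * ((a - b) * (a + b)) = e3 * ((c - a) * (c + a)) ->
 ~~ [&& D a, D b & D c] ->
 a + b != 0 -> b + c != 0 -> c + a != 0 ->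
 ~~ odd (logn q (`|(a + b)%R| * `|(b + c)%R| * `|(c + a)%R|)%N).
Proof.
move=> h1 h2 h3 E1 E2 habc n1 n2 n3.
rewrite !lognM ?muln_gt0 ?absz_gt0 ?n1 ?n2 ?n3 //.
case: (boolP (D ((a - b) * (a + b)))) => P1; last first.
  have P2 : ~~ D ((b - c) * (b + c)).
    move: P1; apply: contra => h.
    have : D (e1 * ((a - b) * (a + b))) by rewrite E1 dvdz_mull.
    by rewrite DM (negbTE h1).
  have P3 : ~~ D ((c - a) * (c + a)).
    move: P1; apply: contra => h.
    have : D (e2 * ((a - b) * (a + b))) by rewrite E2 dvdz_mull.
    by rewrite DM (negbTE h2).
  rewrite DM negb_or in P1; rewrite DM negb_or in P2; rewrite DM negb_or in P3.
  case/andP: P1 => _ P1; case/andP: P2 => _ P2; case/andP: P3 => _ P3.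
  by rewrite !logn_nd.
have P2 : D ((b - c) * (b + c)).
  have : D (e3 * ((b - c) * (b + c))) by rewrite -E1 dvdz_mull.
  by rewrite DM (negbTE h3).
have P3 : D ((c - a) * (c + a)).
  have : D (e3 * ((c - a) * (c + a))) by rewrite -E2 dvdz_mull.
  by rewrite DM (negbTE h3).
rewrite DM in P1; rewrite DM in P2; rewrite DM in P3.
have na : ~~ D a.
  apply: contra habc => da.
  have db : D b.
    case/orP: P1 => h.
      by have := rpredB da h; rewrite (_ : a - (a - b) = b) //; ring.
    by have := rpredB h da; rewrite (_ : a + b - a = b) //; ring.
  have dc : D c.
    case/orP: P3 => h.
      by have := rpredD h da; rewrite (_ : c - a + a = c) //; ring.
    by have := rpredB h da; rewrite (_ : c + a - a = c) //; ring.
  by rewrite da db dc.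
have nb : ~~ D b.
  apply: contra na => db.
  case/orP: P1 => h.
    by have := rpredD h db; rewrite (_ : a - b + b = a) //; ring.
  by have := rpredB h db; rewrite (_ : a + b - b = a) //; ring.
have nc : ~~ D c.
  apply: contra na => dc.
  case/orP: P3 => h.
    by have := rpredB dc h; rewrite (_ : c - (c - a) = a) //; ring.
  by have := rpredB h dc; rewrite (_ : c + a - c = a) //; ring.
have Y1 : D (a + b) -> ~~ D (a - b).
  move=> h; apply: contra na => h'; apply: D2.
  by have := rpredD h h'; rewrite (_ : a + b + (a - b) = 2 * a) //; ring.
have Y2 : D (b + c) -> ~~ D (b - c).
  move=> h; apply: contra nb => h'; apply: D2.
  by have := rpredD h h'; rewrite (_ : b + c + (b - c) = 2 * b) //; ring.
have Y3 : D (c + a) -> ~~ D (c - a).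
  move=> h; apply: contra nc => h'; apply: D2.
  by have := rpredD h h'; rewrite (_ : c + a + (c - a) = 2 * c) //; ring.
case: (boolP (D (a + b))) => X1; case: (boolP (D (b + c))) => X2;
  case: (boolP (D (c + a))) => X3.
- exfalso; move: na; apply/negP/negPn; apply: D2.
  have := rpredD (rpredB X1 X2) X3.
  by rewrite (_ : a + b - (b + c) + (c + a) = 2 * a) //; ring.
- rewrite (logn_nd _ X3) addn0 (vlem _ _ _ _ _ _ E1) ?Y1 ?Y2 ?n2 //.
  by rewrite addnn odd_double.
- rewrite (logn_nd _ X2) addn0 (vlem _ _ _ _ _ _ E2) ?Y1 ?Y3 ?n3 //.
  by rewrite addnn odd_double.
- exfalso; move: na; apply/negP/negPn; apply: D2.
  have hY2 : D (b - c) by move: P2; rewrite (negbTE X2) orbF.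
  have hY3 : D (c - a) by move: P3; rewrite (negbTE X3) orbF.
  have := rpredB (rpredB X1 hY2) hY3.
  by rewrite (_ : a + b - (b - c) - (c - a) = 2 * a) //; ring.
- have E3 : (e2 * e3) * ((b - c) * (b + c)) = (e1 * e3) * ((c - a) * (c + a)).
    by rewrite -mulrA -E1 mulrCA E2 !mulrA.
  rewrite (logn_nd _ X1) add0n (vlem _ _ _ _ _ _ E3) ?Y2 ?Y3 ?n3 ?DM ?negb_or ?h1 ?h2 ?h3 //.
  by rewrite addnn odd_double.
- exfalso; move: nc; apply/negP/negPn; apply: D2.
  have hY1 : D (a - b) by move: P1; rewrite (negbTE X1) orbF.
  have hY3 : D (c - a) by move: P3; rewrite (negbTE X3) orbF.
  have := rpredD (rpredD hY1 X2) hY3.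
  by rewrite (_ : a - b + (b + c) + (c - a) = 2 * c) //; ring.
- exfalso; move: na; apply/negP/negPn; apply: D2.
  have hY1 : D (a - b) by move: P1; rewrite (negbTE X1) orbF.
  have hY2 : D (b - c) by move: P2; rewrite (negbTE X2) orbF.
  have := rpredD (rpredD hY1 hY2) X3.
  by rewrite (_ : a - b + (b - c) + (c + a) = 2 * a) //; ring.
- by rewrite !logn_nd.
Qed.
End Val.


Lemma intr_natE p n : ((n%:Z)%:~R : 'F_p) = n%:R.
Proof. by []. Qed.

Lemma qr_of_Fp p N : prime p -> (exists y : 'F_p, y ^+ 2 = N%:~R) -> is_qr N p.
Proof.
move=> pr [y hy]; exists (nat_of_ord y)%:Z; apply/eqP; rewrite -Fp_intE //.
rewrite rmorphXn /=.
have -> : (((nat_of_ord y)%:Z)%:~R : 'F_p) = y by change (((nat_of_ord y)%:R : 'F_p) = y); exact: natr_Zp.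
by rewrite hy.
Qed.

Lemma Fp_of_qr p r : prime r -> odd r -> is_nonzero_qr p%:Z r -> (p%:R : 'F_r) ^+ r./2 = 1.
Proof.
move=> rr or [nd [x hx]].
have : ((x ^+ 2)%:~R : 'F_r) == (p%:Z)%:~R by rewrite Fp_intE //; apply/eqP.
rewrite rmorphXn /= intr_natE => /eqP hx'.
have xnz : (x%:~R : 'F_r) != 0.
  apply: contra nd => /eqP x0; move: hx'; rewrite x0 expr0n /= => /esym /eqP.
  by rewrite Fp_nat0 // dvdzE.
rewrite -hx' -exprM.
have -> : (2 * r./2 = r.-1)%N by move: or; rewrite -divn2; clear; lia.
exact: Fp_Fermat.
Qed.

Lemma half4_1 M : (M %% 4 = 1)%N -> ~~ odd M./2.
Proof. move=> H. rewrite -divn2. lia. Qed.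

Lemma half4_3 M : (M %% 4 = 3)%N -> odd M./2.
Proof. move=> H. rewrite -divn2. lia. Qed.

Lemma mod4E (a : int) : (a = 1 %[mod 4])%Z -> a = 4 * (a %/ 4)%Z + 1.
Proof.
move=> h; rewrite {1}(divz_eq a 4) h mulrC //.
Qed.

Theorem lemma2p8 (e1 e2 e3 a b c : int) (n : nat) :
  e1 != 0 -> e2 != 0 -> e3 != 0 ->
  e1 + e2 + e3 = 0 ->
  gcdz (gcdz e1 e2) e3 \in [:: 1; 2] ->
  v2 e1 = v2 e2 -> (v2 e2 < v2 e3)%N ->
  gcdz (gcdz a b) c = 1 ->
  ~~ (2 %| a)%Z -> ~~ (2 %| b)%Z -> ~~ (2 %| c)%Z ->
  e1 * a ^+ 2 + e2 * b ^+ 2 + e3 * c ^+ 2 = 0 ->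
  (a = 1 %[mod 4])%Z -> (b = 1 %[mod 4])%Z -> (c = 1 %[mod 4])%Z ->
  (0 < n)%N ->
  (forall p q : nat, prime p -> (p %| n)%N ->
     prime q -> odd q -> (q%:Z %| e1 * e2 * e3)%Z ->
     is_nonzero_qr p%:Z q) ->
  exists N : int,
    N * 8 = (a + b) * (b + c) * (c + a) /\
    (N = 1 %[mod 4])%Z /\
    (forall p : nat, prime p -> (p %| n)%N -> is_qr N p).
Proof.
move=> ne1 ne2 ne3 hsum _ _ _ hgcd _ _ _ heq ha hb hc _ hyp.
set A := (a %/ 4)%Z; set B := (b %/ 4)%Z; set C := (c %/ 4)%Z.
have ea : a = 4 * A + 1 by exact: mod4E.
have eb : b = 4 * B + 1 by exact: mod4E.
have ec : c = 4 * C + 1 by exact: mod4E.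
set N := (2 * A + 2 * B + 1) * (2 * B + 2 * C + 1) * (2 * C + 2 * A + 1).
set K := A + B + C + (A + B) * (B + C) + (B + C) * (C + A) + (C + A) * (A + B)
  + 2 * (A + B) * (B + C) * (C + A).
have eN : N = K * 4 + 1 by rewrite /N /K; ring.
have N8 : N * 8 = (a + b) * (b + c) * (c + a) by rewrite /N ea eb ec; ring.
exists N; split => //.
have N4 : (N = 1 %[mod 4])%Z by rewrite eN modzMDl.
split => // p pr pn.
case: (eqVneq p 2) => [-> | p2].
  exists 1; apply/eqP; rewrite eqz_mod_dvd eN.
  by rewrite (_ : 1 ^+ 2 - (K * 4 + 1) = - (K * 2) * 2%:Z) ?dvdz_mull //; ring.
have op : odd p.
  apply/negPn/negP => ev.
  have : (2 %| p)%N by rewrite dvdn2.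
  by rewrite dvdn_prime2 // eq_sym (negbTE p2).
case: (boolP (p%:Z %| N)%Z) => pN.
  exists 0; apply/eqP; rewrite eqz_mod_dvd expr0n /= sub0r.
  by rewrite rpredN.
apply: qr_of_Fp => //; apply: Fp_euler => //.
set M := `|N|%N.
have pM : ~~ (p %| M)%N by move: pN; rewrite dvdzE absz_nat.
have N0 : N != 0.
  apply/eqP => N0; move: N4; rewrite N0 /= => /eqP; by rewrite modz_nat.
have M4 : ((M %% 4 = 1)%N /\ N = M%:Z) \/ ((M %% 4 = 3)%N /\ N = - M%:Z).
  case: (lerP 0 N) => sN.
    have eM : N = M%:Z by rewrite /M gez0_abs.
    left; split => //.
    have : (M%:Z %% 4)%Z = 1 by rewrite -eM eN modzMDl.
    by rewrite modz_nat => -[].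
  have eM : N = - M%:Z by rewrite /M ltz0_abs ?opprK.
  right; split => //.
  have : (M%:Z %% 4)%Z = 3.
    rewrite (_ : M%:Z = (- K - 1) * 4 + 3); first by rewrite modzMDl.
    by rewrite -[M%:Z]opprK -eM eN; ring.
  by rewrite modz_nat => -[].
have oM : odd M by case: M4 => -[h _]; move: h; clear; lia.
have nz3 : (a + b) * (b + c) * (c + a) != 0 by rewrite -N8 mulf_neq0.
rewrite !mulf_eq0 !negb_or -andbA in nz3; case/and3P: nz3 => n1 n2 n3.
have E1 : e1 * ((a - b) * (a + b)) = e3 * ((b - c) * (b + c)).
  apply/eqP; rewrite -subr_eq0.
  rewrite (_ : _ - _ = (e1 * a ^+ 2 + e2 * b ^+ 2 + e3 * c ^+ 2) - (e1 + e2 + e3) * b ^+ 2); last by ring.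
  by rewrite heq hsum mul0r subr0.
have E2 : e2 * ((a - b) * (a + b)) = e3 * ((c - a) * (c + a)).
  apply/eqP; rewrite -subr_eq0.
  rewrite (_ : _ - _ = (e1 + e2 + e3) * a ^+ 2 - (e1 * a ^+ 2 + e2 * b ^+ 2 + e3 * c ^+ 2)); last by ring.
  by rewrite heq hsum mul0r subr0.
have JM : (M%:R : 'F_p) ^+ p./2 = (-1) ^+ (p./2 * M./2)%N.
  apply: jac => // r rr rM.
  have or : odd r.
    apply/negPn/negP => er; have h2 : (2 %| M)%N.
      by apply: dvdn_trans rM; rewrite dvdn2.
    by move: h2; rewrite dvdn2 oM.
  case: (boolP (r%:Z %| e1 * e2 * e3)%Z) => hr.
    by left; apply: Fp_of_qr => //; apply: hyp.
  right; rewrite !(@DM r rr) !negb_or -andbA in hr; case/and3P: hr => h1 h2 h3.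
  have habc : ~~ [&& (r%:Z %| a)%Z, (r%:Z %| b)%Z & (r%:Z %| c)%Z].
    apply/negP => /and3P [da db dc].
    have : (r%:Z %| gcdz (gcdz a b) c)%Z by rewrite !dvdz_gcd da db dc.
    rewrite hgcd dvdzE /= dvdn1 => /eqP r1; by move: rr; rewrite r1.
  have := @Aval r rr or a b c e1 e2 e3 h1 h2 h3 E1 E2 habc n1 n2 n3.
  have -> : (`|(a + b)%R| * `|(b + c)%R| * `|(c + a)%R| = M * 8)%N by rewrite -!abszM -N8 abszM.
  have r8 : ~~ (r %| 8)%N.
    rewrite (_ : 8 = 2 * (2 * 2))%N // !Euclid_dvdM // dvdn_prime2 //.
    by rewrite !orbb; apply/negP => /eqP r2; move: or; rewrite r2.
  have M0 : (0 < M)%N by rewrite absz_gt0.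
  by rewrite (lognM _ M0 (isT : (0 < 8)%N)) (@logn_coprime r 8) ?prime_coprime // addn0.
case: M4 => [[m4 eM] | [m4 eM]].
  by rewrite eM intr_natE JM -signr_odd oddM (negbTE (half4_1 _ m4)) andbF expr0.
rewrite eM rmorphN /= intr_natE exprNn JM -exprD -signr_odd oddD oddM (half4_3 _ m4).
by rewrite andbT addbb expr0.
Qed.
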